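(* There is a 2-player, 2-action, 1-state Markov game with horizon $2$ and a non-Markov (general) policy $\sigma_2$ for player 2 such that for all Markov policies $\sigma_1$ of player 1, $V_1^{\sigma_1\times\sigma_2}=1/2$, yet $\max_{\sigma_1}V_1^{\sigma_1\times\sigma_2}=3/4$, where the maximum is over all (randomized, possibly non-Markov) general policies $\sigma_1$ of player 1.
   Context: An $m$-player finite-horizon Markov game is $\mathcal{G}=(\mathcal{S},H,(\mathcal{A}_i)_{i\in[m]},\mathbb{P},(R_i)_{i\in[m]},\mu)$ with finite states, horizon $H$, finite action sets, transition kernels, deterministic rewards $R_{i,h}(s,\mathbf{a})\in[-1/H,1/H]$, and initial distribution $\mu$. In an episode agents choose actions simultaneously at each step, each agent $i$ observes its own reward $r_{i,h}=R_{i,h}(s_h,\mathbf{a}_h)$, and the state transitions. A general policy of agent $i$ maps its history $(s_1,a_{i,1},r_{i,1},\dots,s_{h-1},a_{i,h-1},r_{i,h-1})$ and current state $s_h$ to a distribution over its actions; a Markov policy depends only on $h$ and $s_h$. $V_1^{\sigma_1\times\sigma_2}$ is player 1's expected total reward when players independently follow $\sigma_1,\sigma_2$. *)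

(* Defs.v *)
From HB Require Import structures.
From mathcomp Require Import all_boot all_order all_algebra.
Set Implicit Arguments. Unset Strict Implicit. Unset Printing Implicit Defensive.
Import Order.TTheory GRing.Theory Num.Theory.
Local Open Scope ring_scope.

Section MarkovGame.
Variable R : realFieldType.

Definition is_distr (T : finType) (p : {ffun T -> R}) : Prop :=
  (forall x, 0 <= p x) /\ \sum_(x : T) p x = 1.

(* A two-player Markov game with state set S, action sets A1, A2, horizon H.
   Steps are indexed h = 0, ..., H-1 (i.e. step h+1 of the paper). *)
Record mgame (S A1 A2 : finType) (H : nat) := MGame {
  trans : nat -> S -> A1 -> A2 -> {ffun S -> R};
  rew1  : nat -> S -> A1 -> A2 -> R;
  rew2  : nat -> S -> A1 -> A2 -> R;
  init  : {ffun S -> R} }.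

Definition valid_game (S A1 A2 : finType) (H : nat) (G : mgame S A1 A2 H) : Prop :=
  (forall h s a1 a2, is_distr (trans G h s a1 a2)) /\
  is_distr (init G) /\
  (forall h s a1 a2, - (H%:R)^-1 <= rew1 G h s a1 a2 <= (H%:R)^-1) /\
  (forall h s a1 a2, - (H%:R)^-1 <= rew2 G h s a1 a2 <= (H%:R)^-1).

(* A general policy of a player with action set A maps its own history
   (s_1, a_1, r_1, ..., s_{h-1}, a_{h-1}, r_{h-1}) and current state s_h
   to a distribution over actions. *)
Definition policy (S A : finType) := seq (S * A * R) -> S -> {ffun A -> R}.

Definition is_policy (S A : finType) (pi : policy S A) : Prop :=
  forall hist s, is_distr (pi hist s).

(* Markov policy: depends only on the step h (= length of history) and s_h *)
Definition is_markov (S A : finType) (pi : policy S A) : Prop :=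
  exists f : nat -> S -> {ffun A -> R}, forall hist s, pi hist s = f (size hist) s.

Fixpoint val1_from (S A1 A2 : finType) (H : nat) (G : mgame S A1 A2 H)
    (p1 : policy S A1) (p2 : policy S A2) (k h : nat)
    (hist1 : seq (S * A1 * R)) (hist2 : seq (S * A2 * R)) (s : S) : R :=
  match k with
  | 0 => 0
  | k'.+1 =>
    \sum_(a1 : A1) \sum_(a2 : A2)
      (p1 hist1 s a1 * p2 hist2 s a2) *
      (rew1 G h s a1 a2 +
       \sum_(s' : S) trans G h s a1 a2 s' *
          val1_from G p1 p2 k' h.+1
            (rcons hist1 (s, a1, rew1 G h s a1 a2))
            (rcons hist2 (s, a2, rew2 G h s a1 a2)) s')
  end.

Definition V1 (S A1 A2 : finType) (H : nat) (G : mgame S A1 A2 H)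
    (p1 : policy S A1) (p2 : policy S A2) : R :=
  \sum_(s : S) init G s * val1_from G p1 p2 H 0 [::] [::] s.

End MarkovGame.

(* Main.v *)
Require Import Defs.
From HB Require Import structures.
From mathcomp Require Import all_boot all_order all_algebra.
From mathcomp Require Import ring lra.
Import Order.TTheory GRing.Theory Num.Theory.
Local Open Scope ring_scope.

Lemma sum_unit (R : realFieldType) (F : unit -> R) : \sum_(s : unit) F s = F tt.
Proof. by rewrite (big_pred1 tt) // => -[]. Qed.

Section Ex.
Variable R : realFieldType.

Definition rwd (h : nat) (s : unit) (a1 a2 : bool) : R := if a1 == a2 then 1/2 else 0.

Definition G0 : mgame R unit bool bool 2 :=
  @MGame R unit bool bool 2 (fun _ _ _ _ => [ffun _ => 1]) rwd (fun _ _ _ _ => 0) [ffun _ => 1].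

Definition unif : {ffun bool -> R} := [ffun _ => 1/2].

Definition pm (a : bool) : {ffun bool -> R} := [ffun b => if b == a then 1 else 0].

Definition sig2 : policy R unit bool :=
  fun hist s => match hist with [::] => unif | (_, a, _) :: _ => pm a end.

Definition sig1b : policy R unit bool :=
  fun hist s => match hist with [::] => unif
    | (_, a, r) :: _ => if r == 1/2 then pm a else pm (~~ a) end.

Lemma V1E (p1 : policy R unit bool) :
  V1 G0 p1 sig2 =
  \sum_(a1 : bool) \sum_(a2 : bool) (p1 [::] tt a1 * (1/2)) *
     (rwd 0 tt a1 a2 + p1 [:: (tt, a1, rwd 0 tt a1 a2)] tt a2 * (1/2)).
Proof.
rewrite /V1 sum_unit /= ffunE mul1r.
apply: eq_bigr => a1 _; apply: eq_bigr => a2 _.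
rewrite ffunE sum_unit ffunE mul1r.
congr (_ * (_ + _)).
rewrite !sum_unit /=. idtac.
rewrite mul1r !big_bool /pm /rwd !ffunE; case: a2 => /=; lra.
Qed.

End Ex.

Lemma distr_bool (R : realFieldType) (p : {ffun bool -> R}) :
  is_distr p -> [/\ 0 <= p true, 0 <= p false & p true + p false = 1].
Proof. by case=> H0; rewrite big_bool => H1; split. Qed.

Theorem proposition6p1 (R : realFieldType) :
  exists G : mgame R unit bool bool 2,
    valid_game G /\
    exists sigma2 : policy R unit bool,
      is_policy sigma2 /\ ~ is_markov sigma2 /\
      (forall sigma1 : policy R unit bool,
          is_policy sigma1 -> is_markov sigma1 -> V1 G sigma1 sigma2 = 1 / 2) /\
      (exists sigma1 : policy R unit bool,
          is_policy sigma1 /\ V1 G sigma1 sigma2 = 3 / 4) /\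
      (forall sigma1 : policy R unit bool,
          is_policy sigma1 -> V1 G sigma1 sigma2 <= 3 / 4).
Proof.
have h2 : (2%:R : R)^-1 = 1/2 by rewrite div1r.
have h0 : ((0:R) == 1/2) = false by apply/eqP; lra.
have pmD a : is_distr (pm R a).
  split=> [x|]; first by rewrite ffunE; case: ifP.
  by rewrite big_bool !ffunE; case: a => /=; rewrite ?addr0 ?add0r.
have uD : is_distr (unif R).
  by split=> [x|]; rewrite ?big_bool !ffunE /=; lra.
exists (G0 R); split.
  split; first by move=> *; split=> [x|]; rewrite ?sum_unit ffunE ?ffunE.
  split; first by split=> [x|]; rewrite ?sum_unit ffunE ?ffunE.
  rewrite h2 /=; split=> h s a1 a2; rewrite /rwd; try case: ifP; move=> *; apply/andP; split; lra.
exists (sig2 R); split; first by move=> [|[[s a] r] l] t; [exact: uD | exact: pmD].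
split.
  move=> [f Hf].
  have E1 := Hf [:: (tt, true, 0)] tt; have E2 := Hf [:: (tt, false, 0)] tt.
  have := congr1 (fun p : {ffun bool -> R} => p true) (etrans E1 (esym E2)).
  rewrite /= /pm !ffunE /=; lra.
split.
  move=> s1 Hp [f Hf]; rewrite V1E !big_bool !Hf /= /rwd /=.
  have [] := @distr_bool _ _ (Hp [::] tt); rewrite Hf /= => ? ? ?.
  have [] := @distr_bool _ _ (Hp [:: (tt, true, 0)] tt); rewrite Hf /= => ? ? ?.
  rewrite (_ : f 0%N tt false = 1 - f 0%N tt true); last lra.
  rewrite (_ : f 1%N tt false = 1 - f 1%N tt true); last lra.
  by field.
split.
  exists (sig1b R); split.
    move=> [|[[s a] r] l] t /=; [exact: uD | case: ifP => _; exact: pmD].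
  rewrite V1E !big_bool /= /rwd /= eqxx h0 /pm !ffunE /=; lra.
move=> s1 Hp; rewrite V1E !big_bool /= /rwd /=.
have [x0 x1 xe] := @distr_bool _ _ (Hp [::] tt).
have [a0 a1 ae] := @distr_bool _ _ (Hp [:: (tt, true, 1/2)] tt).
have [b0 b1 be] := @distr_bool _ _ (Hp [:: (tt, true, 0)] tt).
have [c0 c1 ce] := @distr_bool _ _ (Hp [:: (tt, false, 0)] tt).
have [d0 d1 de] := @distr_bool _ _ (Hp [:: (tt, false, 1/2)] tt).
set x := s1 [::] tt true in x0 xe *; set y := s1 [::] tt false in x1 xe *.
set a := s1 [:: (tt, true, 1/2)] tt true in a0 ae *.
set b := s1 [:: (tt, true, 0)] tt false in b1 be *.
set c := s1 [:: (tt, false, 0)] tt true in c0 ce *.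
set d := s1 [:: (tt, false, 1/2)] tt false in d1 de *.
have ha : x * (1 - a) >= 0 by apply: mulr_ge0 => //; lra.
have hb : x * (1 - b) >= 0 by apply: mulr_ge0 => //; lra.
have hc : y * (1 - c) >= 0 by apply: mulr_ge0 => //; lra.
have hd : y * (1 - d) >= 0 by apply: mulr_ge0 => //; lra.
nra.
Qed.
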